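(* Let $d\in\mathbb{N}$, $k\in\{1,\dots,d\}$ and $\mathbf{e}_1\in\mathbb{R}^d$. Assume there exists $\delta>0$ such that (a) $\big||e_{1i}|-|e_{1j}|\big|\ge\sqrt2\,\delta$ for all $i\neq j$ in $\mathrm{TopFeatures}(\mathbf{e}_1;\min(k+1,d))$, and (b) if $k=d$, additionally $|e_{1i}|\ge\delta$ for all $i\in[d]$. Then for every $\mathbf{e}_2\in\mathbb{R}^d$, $$1-\mathrm{SignedRankAgree}(\mathbf{e}_1,\mathbf{e}_2;k)\le\delta^{-1}\,\|\mathbf{e}_1-\mathbf{e}_2\|_2 .$$
   Context: $\|\cdot\|_2$ is the Euclidean norm. $\mathrm{sign}(x):=1$ if $x\ge0$ and $-1$ otherwise. For $\mathbf{x}\in\mathbb{R}^d$, $\mathrm{rank}(\mathbf{x},i)$ denotes the position of index $i$ when indices are ordered by descending $|x_i|$, i.e. $|\{j\in[d]:|x_j|\ge|x_i|\}|$, with ties broken so that ranks form a permutation of $[d]$ (paper's convention: if $|x_i|=|x_j|$ with $i>j$ then $\mathrm{rank}(\mathbf{x},j)=\mathrm{rank}(\mathbf{x},i)+1$). $\mathrm{TopFeatures}(\mathbf{x};m):=\{i\in[d]:\mathrm{rank}(\mathbf{x},i)\le m\}$. The top-$k$ signed rank agreement is $\mathrm{SignedRankAgree}(\mathbf{e}_1,\mathbf{e}_2;k):=\frac1k\big|\{i\in[d]: i\in\mathrm{TopFeatures}(\mathbf{e}_1;k)\wedge i\in\mathrm{TopFeatures}(\mathbf{e}_2;k)\wedge\mathrm{sign}(e_{1i})=\mathrm{sign}(e_{2i})\wedge\mathrm{rank}(\mathbf{e}_1,i)=\mathrm{rank}(\mathbf{e}_2,i)\}\big|$.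 *)

(* Defs.v *)
From mathcomp Require Import all_boot all_order all_algebra.
Set Implicit Arguments. Unset Strict Implicit. Unset Printing Implicit Defensive.
Import Order.TTheory GRing.Theory Num.Theory.
Local Open Scope ring_scope.

Section Defs.
Variables (R : rcfType) (d : nat).

Definition sgn (x : R) : R := if 0 <= x then 1 else -1.

Definition norm2 (x : 'I_d -> R) : R := Num.sqrt (\sum_(i < d) (x i) ^+ 2).

(* rank(x,i): position of i when ordered by descending |x_i|, ties broken so
   that a larger index comes first (paper: |x_i|=|x_j|, i>j => rank j = rank i + 1). *)
Definition rank (x : 'I_d -> R) (i : 'I_d) : nat :=
  #|[set j : 'I_d | (`|x i| < `|x j|) || ((`|x j| == `|x i|) && (i <= j)%N)]|.

Definition TopFeatures (x : 'I_d -> R) (m : nat) : {set 'I_d} :=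
  [set i : 'I_d | (rank x i <= m)%N].

Definition SignedRankAgree (e1 e2 : 'I_d -> R) (k : nat) : R :=
  #|[set i : 'I_d | (i \in TopFeatures e1 k) && (i \in TopFeatures e2 k)
                       && (sgn (e1 i) == sgn (e2 i)) && (rank e1 i == rank e2 i)]|%:R
  / k%:R.

End Defs.

(* Main.v *)
Require Import Defs.
From mathcomp Require Import all_boot all_order all_algebra.
From mathcomp Require Import zify ring lra.
Import Order.TTheory GRing.Theory Num.Theory.
Local Open Scope ring_scope.

Section Aux.
Variables (R : rcfType) (d : nat).
Implicit Types (x : 'I_d -> R).

Definition geR x (j i : 'I_d) : bool :=
  (`|x i| < `|x j|) || ((`|x j| == `|x i|) && (i <= j)%N).

Lemma rankE x i : rank x i = #|[set j | geR x j i]|.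
Proof. by []. Qed.

Lemma geR_refl x i : geR x i i.
Proof. by rewrite /geR eqxx leqnn orbT. Qed.

Lemma geR_trans x i j l : geR x l j -> geR x j i -> geR x l i.
Proof.
rewrite /geR => /orP[h1|/andP[/eqP e1 h1]] /orP[h2|/andP[/eqP e2 h2]].
- by rewrite (lt_trans h2 h1).
- by rewrite -e2 h1.
- by rewrite e1 h2.
- by rewrite e1 e2 eqxx (leq_trans h2 h1) orbT.
Qed.

Lemma geR_antisym x i j : geR x j i -> geR x i j -> i = j.
Proof.
rewrite /geR => /orP[h1|/andP[/eqP e1 h1]] /orP[h2|/andP[/eqP e2 h2]].
- by move: (lt_trans h1 h2); rewrite ltxx.
- by move: h1; rewrite e2 ltxx.
- by move: h2; rewrite e1 ltxx.
- by apply: val_inj; apply/eqP; rewrite eqn_leq h1 h2.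
Qed.

Lemma geR_total x i j : geR x j i || geR x i j.
Proof.
rewrite /geR; case: (ltgtP `|x i| `|x j|) => //= e.
by rewrite ?e ?eqxx /= leq_total.
Qed.

Arguments geR_trans {x i j l}.
Arguments geR_antisym {x i j}.
Lemma rank_le x i j : geR x j i -> (rank x j <= rank x i)%N.
Proof.
move=> h; rewrite !rankE; apply: subset_leq_card; apply/subsetP => l.
by rewrite !inE => hl; apply: geR_trans hl h.
Qed.

Arguments rank_le {x i j}.
Lemma rank_lt x i j : geR x j i -> i != j -> (rank x j < rank x i)%N.
Proof.
move=> h nij; rewrite !rankE; apply: proper_card; rewrite properE; apply/andP; split.
  apply/subsetP => l; rewrite !inE => hl; apply: geR_trans hl h.
apply/subsetPn; exists i; first by rewrite inE geR_refl.
rewrite inE; apply/negP => h'; move: nij; by rewrite (geR_antisym h h') eqxx.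
Qed.

Arguments rank_lt {x i j}.
Lemma rank_inj x : injective (rank x).
Proof.
move=> i j e; apply/eqP; apply/negPn/negP => nij.
case/orP: (geR_total x i j) => h.
- by move: (rank_lt h nij); rewrite e ltnn.
- by move: (rank_lt h (nij : j != i)) || (move: (rank_lt h); rewrite eq_sym => /(_ nij); rewrite e ltnn).
Qed.

Lemma rank_gt0 x i : (0 < rank x i)%N.
Proof. by rewrite rankE; apply/card_gt0P; exists i; rewrite inE geR_refl. Qed.

Lemma rank_led x i : (rank x i <= d)%N.
Proof. by rewrite rankE; apply: leq_trans (max_card _) _; rewrite card_ord. Qed.

Lemma rank_lt_abs x i j : (rank x i < rank x j)%N -> `|x j| <= `|x i|.
Proof.
move=> h; rewrite leNgt; apply/negP => h'.
have : geR x j i by rewrite /geR h'.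
by move/rank_le; rewrite leqNgt h.
Qed.

Lemma rank_surj x r : (1 <= r <= d)%N -> exists m, rank x m = r.
Proof.
move=> hr.
have hf : forall i, ((rank x i).-1 < d)%N by move=> i; have := rank_gt0 x i; have := rank_led x i; lia.
pose f i : 'I_d := Ordinal (hf i).
have finj : injective f.
  move=> i j /(congr1 val) /= e; apply: (@rank_inj x).
  have := rank_gt0 x i; have := rank_gt0 x j; move=> *.
  lia.
have [g fg gf] := injF_bij finj.
have hr' : (r.-1 < d)%N by lia.
exists (g (Ordinal hr')).
have := congr1 val (gf (Ordinal hr')); rewrite /= => e.
have := rank_gt0 x (g (Ordinal hr')). move=> *; lia.
Qed.

Lemma top_card x k : (k <= d)%N -> (k <= #|TopFeatures x k|)%N.
Proof.
move=> kd.
have : forall r : 'I_k, exists m, rank x m = r.+1.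
  move=> r; apply: rank_surj; have := ltn_ord r; lia.
case/fin_all_exists => h hh.
have hinj : injective h.
  move=> r s e; apply: ord_inj; have := hh r; have := hh s; rewrite e; lia.
rewrite -{1}(card_ord k) -(card_imset _ hinj); apply: subset_leq_card.
apply/subsetP => l /imsetP [r _ ->]; rewrite inE hh; exact: ltn_ord.
Qed.

End Aux.
Arguments rank_led {R d}. Arguments top_card {R d}. Arguments rank_lt_abs {R d}. Arguments rank_surj {R d}.
Section Real.
Variable R : rcfType.

Lemma order_pres (A B A' B' s : R) :
  s <= `|A - B| -> `|A - A'| + `|B - B'| < s ->
  [/\ (B == A) = false, (B' == A') = false & (A < B) = (A' < B')].
Proof.
move=> hs hu.
have h1 := ler_norm (A - A'); have h2 := ler_norm (-(A - A')); rewrite normrN in h2.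
have h3 := ler_norm (B - B'); have h4 := ler_norm (-(B - B')); rewrite normrN in h4.
case: (ltgtP A B) => hab.
- have e : `|A - B| = B - A by rewrite distrC ger0_norm // subr_ge0 ltW.
  rewrite e in hs.
  have : A' < B' by lra.
  move=> h; rewrite h gt_eqF // gt_eqF //.
- have e : `|A - B| = A - B by rewrite ger0_norm // subr_ge0 ltW.
  rewrite e in hs.
  have : B' < A' by lra.
  by move=> h; rewrite lt_eqF // ltNge ltW.
- rewrite hab subrr normr0 in hs.
  have := normr_ge0 (A - A'); have := normr_ge0 (B - B'); lra.
Qed.

Lemma sgn_pres (a b : R) : `|a - b| < `|a| -> sgn a = sgn b.
Proof.
rewrite /sgn ltr_norml; case: (lerP 0 a) => ha.
- rewrite ger0_norm // => /andP[h1 h2].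
  by have -> : 0 <= b by lra.
- rewrite ltr0_norm // => /andP[h1 h2].
  by have -> : (0 <= b) = false by apply/negbTE; rewrite -ltNge; lra.
Qed.

Lemma sum_two (d : nat) (F : 'I_d -> R) i j : (forall l, 0 <= F l) -> i != j ->
  F i + F j <= \sum_l F l.
Proof.
move=> F0 nij; rewrite (bigD1 i) //= (bigD1 j) 1?eq_sym //=.
have : 0 <= \sum_(i0 | (i0 != i) && (i0 != j)) F i0 by apply: sumr_ge0.
lra.
Qed.

Lemma sum_one (d : nat) (F : 'I_d -> R) i : (forall l, 0 <= F l) -> F i <= \sum_l F l.
Proof.
move=> F0; rewrite (bigD1 i) //=.
have : 0 <= \sum_(i0 | (i0 != i)) F i0 by apply: sumr_ge0.
lra.
Qed.

Lemma norm_one (d : nat) (a : 'I_d -> R) i : `|a i| <= norm2 a.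
Proof.
rewrite /norm2 -sqrtr_sqr ler_sqrt; last by apply: sumr_ge0 => l _; apply: sqr_ge0.
by apply: sum_one => l; apply: sqr_ge0.
Qed.

Lemma norm_two (d : nat) (a : 'I_d -> R) i j : i != j ->
  `|a i| + `|a j| <= Num.sqrt 2 * norm2 a.
Proof.
move=> nij; rewrite /norm2 -sqrtrM //.
have -> : `|a i| + `|a j| = Num.sqrt ((`|a i| + `|a j|)^+2).
  by rewrite sqrtr_sqr (ger0_norm (addr_ge0 (normr_ge0 _) (normr_ge0 _))).
rewrite ler_sqrt; last by rewrite mulr_ge0 // sumr_ge0 // => l _; apply: sqr_ge0.
have := @sum_two d (fun l => a l ^+ 2) i j (fun l => sqr_ge0 (a l)) nij.
rewrite -(real_normK (num_real (a i))) -(real_normK (num_real (a j))).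
set p := `|a i|; set q := `|a j|.
move=> h.
have : (p + q) ^+ 2 <= 2 * (p ^+ 2 + q ^+ 2).
  have e : 2 * (p ^+ 2 + q ^+ 2) - (p + q) ^+ 2 = (p - q) ^+ 2 by ring.
  have := sqr_ge0 (p - q); rewrite -e; lra.
lra.
Qed.

End Real.
Theorem lemma5 (R : rcfType) (d k : nat) (e1 : 'I_d -> R) (delta : R) :
  (1 <= k <= d)%N ->
  0 < delta ->
  (forall i j : 'I_d, i \in TopFeatures e1 (minn k.+1 d) ->
     j \in TopFeatures e1 (minn k.+1 d) -> i != j ->
     Num.sqrt 2 * delta <= `| `|e1 i| - `|e1 j| |) ->
  (k = d -> forall i : 'I_d, delta <= `|e1 i|) ->
  forall e2 : 'I_d -> R,
    1 - SignedRankAgree e1 e2 k <= delta^-1 * norm2 (fun i => e1 i - e2 i).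
Proof.
move=> /andP[k1 kd] d0 hsep hkd e2.
have na : forall l, `|e1 l - e2 l| <= norm2 (fun i => e1 i - e2 i) :=
  fun l => @norm_one R d (fun i => e1 i - e2 i) l.
have nb : forall l m, l != m -> `|e1 l - e2 l| + `|e1 m - e2 m| <=
    Num.sqrt 2 * norm2 (fun i => e1 i - e2 i) :=
  fun l m h => @norm_two R d _ l m h.
set eps := norm2 _ in na nb *.
have SRA0 : 0 <= SignedRankAgree e1 e2 k by rewrite /SignedRankAgree divr_ge0 // ler0n.
have s2 : 1 <= Num.sqrt (2:R).
  by rewrite -[X in X <= _](sqrtr1 R) ler_sqrt // ler1n.
have s2p : 0 < Num.sqrt (2:R) by lra.
have hsd : delta <= Num.sqrt 2 * delta.
  rewrite -subr_ge0; have -> : Num.sqrt 2 * delta - delta = (Num.sqrt 2 - 1) * delta by ring.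
  apply: mulr_ge0; lra.
have eps0 : 0 <= eps by apply: sqrtr_ge0.
have q0 : 0 <= delta^-1 * eps by rewrite mulr_ge0 // invr_ge0 ltW.
case: (lerP delta eps) => hde.
  have : 1 <= delta^-1 * eps by rewrite ler_pdivlMl // mulr1.
  lra.
have seps : Num.sqrt 2 * eps < Num.sqrt 2 * delta by rewrite ltr_pM2l.
pose S := [set i : 'I_d | (i \in TopFeatures e1 k) && (i \in TopFeatures e2 k)
                       && (sgn (e1 i) == sgn (e2 i)) && (rank e1 i == rank e2 i)].
have main : forall i, i \in TopFeatures e1 k -> i \in S.
  move=> i hiT; have hi : (rank e1 i <= k)%N by move: hiT; rewrite inE.
  have hiM : i \in TopFeatures e1 (minn k.+1 d) by rewrite inE; move: hi kd; clear; lia.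
  have sep : forall j, j != i -> Num.sqrt 2 * delta <= `| `|e1 i| - `|e1 j| |.
    move=> j nji.
    case hj: (j \in TopFeatures e1 (minn k.+1 d)).
      by apply: hsep => //; rewrite eq_sym.
    move: hj; rewrite inE => /negbT; rewrite -ltnNge => hj.
    have rjd := rank_led e1 j.
    have hr : (1 <= k.+1 <= d)%N by move: hj rjd; clear; lia.
    have [m hm] := rank_surj e1 k.+1 hr.
    have nim : i != m by apply/eqP => e; rewrite e hm in hi; move: hi; clear; lia.
    have hmT : m \in TopFeatures e1 (minn k.+1 d) by rewrite inE hm; move: hr; clear; lia.
    have h1 := hsep i m hiM hmT nim.
    have h2 : `|e1 m| <= `|e1 i| by apply: (rank_lt_abs e1); rewrite hm; move: hi; clear; lia.
    have h3 : `|e1 j| <= `|e1 m| by apply: (rank_lt_abs e1); rewrite hm; move: hj hr; clear; lia.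
    rewrite ger0_norm in h1; last by rewrite subr_ge0.
    rewrite ger0_norm; first lra.
    rewrite subr_ge0; exact: le_trans h3 h2.
  have big : delta <= `|e1 i|.
    case: (eqVneq k d) => [ekd|nkd]; first exact: hkd ekd i.
    have kd' : (k < d)%N by rewrite ltn_neqAle nkd kd.
    have hr : (1 <= k.+1 <= d)%N by move: kd'; clear; lia.
    have [m hm] := rank_surj e1 k.+1 hr.
    have nmi : m != i by apply/eqP => e; rewrite -e hm in hi; move: hi; clear; lia.
    have h1 := sep m nmi.
    have h2 : `|e1 m| <= `|e1 i| by apply: (rank_lt_abs e1); rewrite hm; move: hi; clear; lia.
    rewrite ger0_norm in h1; last by rewrite subr_ge0.
    have := normr_ge0 (e1 m); lra.
  have hsg : sgn (e1 i) = sgn (e2 i).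
    apply: sgn_pres; have := na i; lra.
  have hrk : rank e2 i = rank e1 i.
    rewrite /rank; apply: eq_card => j; rewrite !inE.
    case: (eqVneq j i) => [->|nji]; first by rewrite !eqxx !leqnn !orbT.
    have hlt : `| `|e1 i| - `|e2 i| | + `| `|e1 j| - `|e2 j| | < Num.sqrt 2 * delta.
      have := ler_dist_dist (e1 i) (e2 i); have := ler_dist_dist (e1 j) (e2 j).
      have nij : i != j by rewrite eq_sym.
      have := nb i j nij; lra.
    have [E1 E2 E3] := order_pres _ _ _ _ _ _ (sep j nji) hlt.
    by rewrite E1 E2 E3.
  by rewrite inE hiT /= inE hrk hi hsg !eqxx.
have hcount : (k <= #|S|)%N.
  apply: leq_trans ((top_card e1 k kd)) _; apply: subset_leq_card.
  by apply/subsetP => i hi; apply: main.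
have : 1 <= SignedRankAgree e1 e2 k.
  by rewrite /SignedRankAgree ler_pdivlMr ?ltr0n // mul1r ler_nat.
lra.
Qed.
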